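(* Let $\mathcal{D}$ be a symmetric $2$-$(56,11,2)$ design (biplane), and let $S$ be the set of all $(0,1)$-vectors of Hamming weight $12$ in $L^\perp$, where $L$ is the linear code over $GF(3)$ of length $56$ (coordinates indexed by the blocks of $\mathcal{D}$) spanned by the rows of the points-by-blocks incidence matrix of $\mathcal{D}$. Let $B$ be a block of $\mathcal{D}$ and $\mathcal{D}_B$ the residual design (a $2$-$(45,9,2)$ design with $55$ blocks, indexed by the blocks of $\mathcal{D}$ other than $B$). Let $S_B\subseteq S$ be the set of vectors in $S$ having entry $0$ in the coordinate indexed by $B$. If there exists a quasi-symmetric $2$-$(56,12,9)$ design $\hat{\mathcal{D}}$ with block intersection numbers $0$ and $3$ and a point $z$ of $\hat{\mathcal{D}}$ such that the derived design $\hat{\mathcal{D}}^z$ is isomorphic to the dual design $(\mathcal{D}_B)^*$ (whose points are the $55$ blocks of $\mathcal{D}$ other than $B$), then $S_B$ contains a set of $165$ vectors whose restrictions to the $55$ coordinates other than $B$ are the incidence vectors of the blocks of a $1$-$(55,12,36)$ design (namely $\hat{\mathcal{D}}_z$, transported via this isomorphism) in which any two distinct blocks are either disjoint or meet in exactly $3$ points.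
   Context: A $t$-$(v,k,\lambda)$ design is a pair $(X,\mathcal{B})$ with $|X|=v$ and a collection $\mathcal{B}$ of $k$-subsets (blocks) such that each $t$-subset of points lies in exactly $\lambda$ blocks; symmetric means the number of blocks is $v$, and a biplane is a symmetric design with $\lambda=2$. A $2$-design is quasi-symmetric with intersection numbers $x<y$ if any two distinct blocks meet in exactly $x$ or $y$ points. For a block $B$, the residual design $\mathcal{D}_B$ has point set $X\setminus B$ and blocks $B_j\setminus B$ ($B_j\ne B$). For a point $z$, the derived design $\hat{\mathcal{D}}^z$ has points $X\setminus\{z\}$ and blocks $\{C\setminus\{z\}: z\in C\}$, and the residual design $\hat{\mathcal{D}}_z$ has points $X\setminus\{z\}$ and blocks $\{C: z\notin C\}$. The dual design swaps the roles of points and blocks, keeping incidence. Code duals are with respect to the standard inner product over $GF(3)$. *)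

(* Defs.v *)
From HB Require Import structures.
From mathcomp Require Import all_boot all_order all_algebra.
Set Implicit Arguments. Unset Strict Implicit. Unset Printing Implicit Defensive.
Import GRing.Theory.
Local Open Scope ring_scope.

(* A symmetric 2-(56,11,2) design (biplane): points P, blocks Bk (abstract
   index types, so repeated blocks are not a priori excluded), incidence inc. *)
Definition biplane_56_11_2 (P Bk : finType) (inc : P -> Bk -> bool) : Prop :=
  [/\ #|P| = 56%N, #|Bk| = 56%N,
      (forall c : Bk, #|[set p | inc p c]| = 11%N) &
      (forall p q : P, p != q -> #|[set c | inc p c && inc q c]| = 2%N)].

Definition inc_row (P Bk : finType) (inc : P -> Bk -> bool) (p : P)
  : {ffun Bk -> 'F_3} := [ffun c => (inc p c)%:R].

Definition dotF3 (Bk : finType) (x y : {ffun Bk -> 'F_3}) : 'F_3 :=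
  \sum_(c : Bk) x c * y c.

Definition in_L (P Bk : finType) (inc : P -> Bk -> bool) (y : {ffun Bk -> 'F_3})
  : Prop :=
  exists a : {ffun P -> 'F_3},
    forall c : Bk, y c = \sum_(p : P) a p * inc_row inc p c.

Definition in_Lperp (P Bk : finType) (inc : P -> Bk -> bool) (x : {ffun Bk -> 'F_3})
  : Prop := forall y, in_L inc y -> dotF3 x y = 0.

Definition in_S (P Bk : finType) (inc : P -> Bk -> bool) (x : {ffun Bk -> 'F_3})
  : Prop :=
  [/\ (forall c, (x c == 0) || (x c == 1)),
      #|[set c | x c != 0]| = 12%N &
      in_Lperp inc x].

Definition in_SB (P Bk : finType) (inc : P -> Bk -> bool) (B : Bk)
  (x : {ffun Bk -> 'F_3}) : Prop := in_S inc x /\ x B = 0.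

(* A quasi-symmetric 2-(56,12,9) design with intersection numbers 0 and 3,
   with blocks given as a set of subsets of the point set Ph. (Repeated blocks
   would meet in 12 points, so a set of blocks loses nothing.) *)
Definition qs_design_56_12_9 (Ph : finType) (Bh : {set {set Ph}}) : Prop :=
  [/\ #|Ph| = 56%N,
      (forall C, C \in Bh -> #|C| = 12%N),
      (forall p q : Ph, p != q -> #|[set C in Bh | (p \in C) && (q \in C)]| = 9%N) &
      (forall C D, C \in Bh -> D \in Bh -> C != D ->
          (#|C :&: D| == 0%N) || (#|C :&: D| == 3%N))].

Definition derived_blocks (Ph : finType) (Bh : {set {set Ph}}) (z : Ph)
  : {set {set Ph}} := [set C :\ z | C in [set C in Bh | z \in C]].

Definition residual_pt_blocks (Ph : finType) (Bh : {set {set Ph}}) (z : Ph)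
  : {set {set Ph}} := [set C in Bh | z \notin C].

(* blocks of the dual (D_B)^* of the residual design D_B: its points are the
   blocks c <> B of D, and there is one block per point p of D_B (p not in B),
   namely the set of blocks c <> B with p in c \ B. *)
Definition dual_residual_blocks (P Bk : finType) (inc : P -> Bk -> bool) (B : Bk)
  : {set {set Bk}} :=
  [set [set c | (c != B) && inc p c] | p in [set p | ~~ inc p B]].

Definition iso_derived_dual (P Bk Ph : finType) (inc : P -> Bk -> bool) (B : Bk)
  (Bh : {set {set Ph}}) (z : Ph) (f : Ph -> Bk) : Prop :=
  [/\ {in [set~ z] &, injective f},
      f @: [set~ z] = [set~ B] &
      [set f @: C | C : {set Ph} in derived_blocks Bh z] = dual_residual_blocks inc B].

(* Main.v *)
Require Import Defs.
From HB Require Import structures.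
From mathcomp Require Import all_boot all_order all_algebra.
From mathcomp Require Import zify ring.
Import GRing.Theory.
Set Implicit Arguments. Unset Strict Implicit.

Lemma sum_card (T : finType) (Q : pred T) :
  (\sum_x (Q x : nat))%N = #|[set x | Q x]|.
Proof.
rewrite -sum1_card [RHS]big_mkcond /=; apply: eq_bigr => x _.
by rewrite inE; case: (Q x).
Qed.

Lemma bp_r (P Bk : finType) (inc : P -> Bk -> bool) :
  biplane_56_11_2 inc -> forall p, #|[set c | inc p c]| = 11.
Proof.
case=> hP hB hk hl p.
set S := (\sum_q \sum_c ((q != p) && inc p c && inc q c : nat))%N.
have E1 : S = 110.
  transitivity (\sum_q ((q != p) : nat) * 2)%N.
    apply: eq_bigr => q _; case: eqP => [->|/eqP nq] /=.
      by rewrite big1.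
    by rewrite mul1n -(hl p q); [rewrite sum_card | rewrite eq_sym].
  rewrite -big_distrl /= sum_card.
  have -> : [set x | x != p] = [set~ p] by apply/setP => x; rewrite !inE.
  by rewrite cardsC1 hP.
have E2 : S = (#|[set c | inc p c]| * 10)%N.
  rewrite /S exchange_big -sum_card big_distrl /=; apply: eq_bigr => c _.
  case hpc: (inc p c) => /=; last by rewrite big1 // => q; rewrite andbF.
  rewrite mul1n sum_card.
  have : #|[set q | inc q c]| = 11 := hk c.
  rewrite (cardsD1 p) inE hpc add1n => -[<-].
  apply: eq_card => q; by rewrite !inE andbT.
move: E1; rewrite E2; lia.
Qed.

Lemma sum_card_cond (T : finType) (R Q : pred T) :
  (\sum_(x | R x) (Q x : nat))%N = #|[set x | R x && Q x]|.
Proof.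
rewrite big_mkcond /= -sum_card; apply: eq_bigr => x _.
by case: (R x).
Qed.

Lemma pairs_card (T : finType) (A : {set T}) :
  (\sum_p \sum_q ((p != q) && (p \in A) && (q \in A) : nat))%N
  = (#|A| * (#|A| - 1))%N.
Proof.
transitivity (\sum_p ((p \in A) : nat) * (#|A| - 1))%N.
  apply: eq_bigr => p _; case hp: (p \in A) => /=; last first.
    by rewrite big1 // => q; rewrite andbF.
  rewrite mul1n sum_card (cardsD1 p A) hp add1n subn1 /=.
  by apply: eq_card => q; rewrite !inE andbT eq_sym.
by rewrite -big_distrl /= sum_card; congr (_ * _)%N; apply: eq_card => x; rewrite inE.
Qed.

Lemma bp_dual (P Bk : finType) (inc : P -> Bk -> bool) :
  biplane_56_11_2 inc -> forall c c0, c != c0 ->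
  #|[set p | inc p c && inc p c0]| = 2.
Proof.
move=> hbp; have hr := bp_r hbp; case: hbp => hP hB hk hl c1 c0 nc.
pose m c := #|[set p | inc p c && inc p c0]|.
have Eb : (\sum_(c | c != c0) m c = 110)%N.
  rewrite /m; under eq_bigr do rewrite -sum_card.
  rewrite exchange_big /=.
  transitivity (\sum_p (inc p c0 : nat) * 10)%N; last first.
    by rewrite -big_distrl /= sum_card hk.
  apply: eq_bigr => p _; case hp: (inc p c0) => /=; last first.
    by rewrite big1 // => c _; rewrite andbF.
  rewrite mul1n sum_card_cond.
  have := hr p; rewrite (cardsD1 c0) inE hp add1n => -[<-].
  by apply: eq_card => c; rewrite !inE andbT.
have Ec : (\sum_(c | c != c0) m c * (m c - 1) = 110)%N.
  rewrite /m; under eq_bigr do rewrite -pairs_card.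
  rewrite exchange_big /=.
  under eq_bigr do rewrite exchange_big /=.
  transitivity (\sum_p \sum_q ((p != q) && (p \in [set p | inc p c0])
                              && (q \in [set p | inc p c0]) : nat))%N; last first.
    by rewrite pairs_card hk.
  apply: eq_bigr => p _; apply: eq_bigr => q _.
  under eq_bigr do rewrite !inE; rewrite !inE.
  case hpq: (p != q); last by rewrite big1.
  case hp: (inc p c0); last by rewrite big1 // => c _; rewrite /= !andbF.
  case hq: (inc q c0); last by rewrite big1 // => c _; rewrite /= !andbF.
  rewrite /=; under eq_bigr do rewrite !andbT.
  rewrite sum_card_cond.
  have := hl p q hpq; rewrite (cardsD1 c0) inE hp hq add1n => -[<-].
  by apply: eq_card => c; rewrite !inE.
have Ed : #|[set c | c != c0]| = 55.
  have -> : [set x | x != c0] = [set~ c0] by apply/setP => x; rewrite !inE.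
  by rewrite cardsC1 hB.
pose d c := ((m c - 2) + (2 - m c))%N.
have key : (\sum_(c | c != c0) (m c * (m c - 1) + 4)
           = \sum_(c | c != c0) (3 * m c + d c ^ 2))%N.
  by apply: eq_bigr => c _; rewrite /d; set u := m c; clearbody u; nia.
rewrite !big_split /= Ec !Eb big1_eq in key.
have E4 : (\sum_(c | c != c0) 4 = 220)%N.
  transitivity (\sum_(c in [set c | c != c0]) 4)%N.
    by apply: eq_bigl => c; rewrite inE.
  by rewrite sum_nat_const Ed.
rewrite E4 in key.
have : (\sum_(c | c != c0) d c ^ 2 == 0)%N by apply/eqP; lia.
rewrite sum_nat_eq0 => /forallP /(_ c1) /implyP /(_ nc) /eqP.
rewrite /d -/(m c1); lia.
Qed.

Lemma bp_line (P Bk : finType) (inc : P -> Bk -> bool) (B : Bk) (p a : P) :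
  biplane_56_11_2 inc -> inc p B -> inc a B -> p != a ->
  exists c0, [/\ c0 != B, inc p c0, inc a c0 &
    forall q, inc q c0 -> inc q B -> (q == p) || (q == a)].
Proof.
move=> hbp hpB haB npa.
have hd := bp_dual hbp; case: hbp => hP hB hk hl.
have := hl p a npa; rewrite (cardsD1 B) inE hpB haB add1n => -[].
move=> h1; have : (0 < #|[set c | inc p c & inc a c] :\ B|)%N by rewrite h1.
case/card_gt0P => c0; rewrite !inE => /and3P [nc0 hp ha].
exists c0; split => // q hq hqB.
have hc := hd c0 B nc0.
have sub : [set p; a] \subset [set q | inc q c0 & inc q B].
  by apply/subsetP => x; rewrite !inE => /orP [] /eqP ->; rewrite ?hp ?ha ?hpB ?haB.
have : [set p; a] == [set q | inc q c0 & inc q B].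
  by rewrite eqEcard sub hc cards2 npa.
move/eqP => E.
have : q \in [set q | inc q c0 & inc q B] by rewrite inE hq hqB.
by rewrite -E !inE.
Qed.

Local Open Scope ring_scope.

Lemma F3_3 : (3%:R : 'F_3) = 0. Proof. by apply/eqP. Qed.
Lemma F3_double (u : 'F_3) : u + u = 0 -> u = 0.
Proof.
move=> H.
have -> : u = (u + u) *+ 2 - u *+ 3.
  by rewrite -mulr2n -mulrnA -mulrnBr.
by rewrite H mul0rn -mulr_natr F3_3 mulr0 subr0.
Qed.

Definition ind (Bk : finType) (X : {set Bk}) : {ffun Bk -> 'F_3} :=
  [ffun c => (c \in X)%:R].

Definition keyc (P Bk : finType) (inc : P -> Bk -> bool) (X : {set Bk}) (p : P)
  : 'F_3 := (#|[set c in X | inc p c]|)%:R.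

Lemma natb_mul (b1 b2 : bool) : (b1%:R * b2%:R : 'F_3) = (b1 && b2)%:R.
Proof. by case: b1; case: b2; rewrite ?mul1r ?mul0r. Qed.

Lemma perp_of_rows (P Bk : finType) (inc : P -> Bk -> bool) (X : {set Bk}) :
  (forall p, keyc inc X p = 0) -> in_Lperp inc (ind X).
Proof.
move=> H y [a Ha]; rewrite /dotF3.
under eq_bigr do rewrite Ha big_distrr /=.
rewrite exchange_big /= big1 // => p _.
transitivity (a p * keyc inc X p); last by rewrite H mulr0.
rewrite /keyc -sum_card natr_sum big_distrr /=; apply: eq_bigr => c _.
by rewrite /ind /inc_row !ffunE mulrCA natb_mul.
Qed.

Lemma key_pair (P Bk : finType) (inc : P -> Bk -> bool) (B : Bk) (X : {set Bk})
  (p a : P) :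
  biplane_56_11_2 inc -> #|X| = 12%N ->
  (forall q, ~~ inc q B -> keyc inc X q = 0) ->
  inc p B -> inc a B -> p != a -> keyc inc X p + keyc inc X a = 0.
Proof.
move=> hbp hX H hpB haB npa.
have [c0 [nc0 hp ha hq]] := bp_line hbp hpB haB npa.
have hd := bp_dual hbp; case: hbp => hP hB hk hl.
have S1 : \sum_(q | inc q c0) keyc inc X q = 0.
  rewrite /keyc; under eq_bigr do rewrite -sum_card natr_sum.
  rewrite exchange_big /=.
  transitivity (\sum_c (c \in X)%:R * (2%:R : 'F_3)).
    apply: eq_bigr => c _; case hc: (c \in X) => /=; last first.
      by rewrite mul0r big1.
    rewrite mul1r -natr_sum sum_card_cond.
    case: (eqVneq c c0) => [->|ncc].
      have -> : [set x | inc x c0 && inc x c0] = [set x | inc x c0].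
        by apply/setP => x; rewrite !inE andbb.
      by rewrite hk; apply/eqP.
    rewrite (_ : #|[set x | inc x c0 & inc x c]| = 2%N) //.
    by rewrite -(hd c c0 ncc); apply: eq_card => x; rewrite !inE andbC.
  rewrite -big_distrl /= -natr_sum sum_card (_ : [set x in X] = X); last by apply/setP => x; rewrite inE.
  by rewrite hX; apply/eqP.
have S2 : \sum_(q | inc q c0) keyc inc X q = keyc inc X p + keyc inc X a.
  rewrite (bigID (fun q => inc q B)) /= [X in _ + X]big1 ?addr0; last first.
    by move=> q /andP [_ /H].
  rewrite (eq_bigl (fun q => q \in [set p; a])); last first.
    move=> q; rewrite !inE; apply/idP/idP.
      by case/andP => /hq h /h.
    by case/orP => /eqP ->; rewrite ?hp ?ha ?hpB ?haB.
  by rewrite big_setU1 ?inE // big_set1.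
by rewrite -S2.
Qed.

Lemma key_B (P Bk : finType) (inc : P -> Bk -> bool) (B : Bk) (X : {set Bk}) (p : P) :
  biplane_56_11_2 inc -> #|X| = 12%N ->
  (forall q, ~~ inc q B -> keyc inc X q = 0) ->
  inc p B -> keyc inc X p = 0.
Proof.
move=> hbp hX H hpB.
have := (let: And4 _ _ hk _ := hbp in hk) B.
rewrite (cardsD1 p) inE hpB add1n => -[] h10.
have : (0 < #|[set q | inc q B] :\ p|)%N by rewrite h10.
case/card_gt0P => a; rewrite !inE => /andP [nap haB].
move: h10; rewrite (cardsD1 a) !inE nap haB add1n => -[] h9.
have : (0 < #|[set q | inc q B] :\ p :\ a|)%N by rewrite h9.
case/card_gt0P => b; rewrite !inE => /and3P [nba nbp hbB].
have npa' : p != a by rewrite eq_sym.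
have npb' : p != b by rewrite eq_sym.
have nab' : a != b by rewrite eq_sym.
have e1 := key_pair hbp hX H hpB haB npa'.
have e2 := key_pair hbp hX H hpB hbB npb'.
have e3 := key_pair hbp hX H haB hbB nab'.
apply: F3_double.
have -> : keyc inc X p + keyc inc X p =
  (keyc inc X p + keyc inc X a) + (keyc inc X p + keyc inc X b)
  - (keyc inc X a + keyc inc X b) by ring.
by rewrite e1 e2 e3 subr0 addr0.
Qed.

Lemma card_split (T : finType) (Q R : pred T) :
  #|[set x | Q x]| = (#|[set x | Q x && R x]| + #|[set x | Q x && ~~ R x]|)%N.
Proof.
rewrite -!sum_card -big_split /=; apply: eq_bigr => x _.
by case: (Q x); case: (R x).
Qed.

Lemma qs_r (Ph : finType) (Bh : {set {set Ph}}) :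
  qs_design_56_12_9 Bh -> forall y, #|[set C in Bh | y \in C]| = 45%N.
Proof.
case=> hP hk hl _ y.
set S := (\sum_q \sum_(C in Bh) ((q != y) && (y \in C) && (q \in C) : nat))%N.
have E1 : S = 495%N.
  transitivity (\sum_q ((q != y) : nat) * 9)%N.
    apply: eq_bigr => q _; case: eqP => [->|/eqP nq] /=.
      by rewrite big1.
    rewrite mul1n -(hl y q); last by rewrite eq_sym.
    by rewrite sum_card_cond; apply: eq_card => C; rewrite !inE andbA.
  rewrite -big_distrl /= sum_card.
  have -> : [set x | x != y] = [set~ y] by apply/setP => x; rewrite !inE.
  by rewrite cardsC1 hP.
have E2 : S = (#|[set C in Bh | y \in C]| * 11)%N.
  rewrite /S exchange_big /=.
  transitivity (\sum_(C in Bh) ((y \in C) : nat) * 11)%N; last first.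
    by rewrite -big_distrl /= sum_card_cond; congr (_ * _)%N; apply: eq_card => C; rewrite !inE.
  apply: eq_bigr => C hC; case hyC: (y \in C) => /=; last by rewrite big1 // => q; rewrite andbF.
  rewrite mul1n sum_card.
  have : #|C| = 12%N := hk C hC.
  rewrite (cardsD1 y) hyC add1n => -[<-].
  by apply: eq_card => q; rewrite !inE andbT.
move: E1; rewrite E2; lia.
Qed.

Lemma qs_b (Ph : finType) (Bh : {set {set Ph}}) :
  qs_design_56_12_9 Bh -> #|Bh| = 210%N.
Proof.
move=> hqs; have hr := qs_r hqs; case: hqs => hP hk _ _.
have E : (\sum_y \sum_(C in Bh) ((y \in C) : nat) = #|Bh| * 12)%N.
  rewrite exchange_big /= -sum1_card big_distrl /=; apply: eq_bigr => C hC.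
  by rewrite mul1n sum_card -(hk C hC); apply: eq_card => x; rewrite inE.
have E' : (\sum_y \sum_(C in Bh) ((y \in C) : nat) = 56 * 45)%N.
  transitivity (\sum_(y : Ph) 45)%N.
    apply: eq_bigr => y _; rewrite sum_card_cond -(hr y); apply: eq_card => C; rewrite !inE.
    by [].
  by rewrite sum_nat_const hP.
move: E'; rewrite E; lia.
Qed.

Lemma natb_eq1 (b : bool) : ((b%:R : 'F_3) == 1) = b.
Proof. by case: b; [rewrite eqxx | rewrite eq_sym oner_eq0]. Qed.
Lemma natb_inj (b1 b2 : bool) : (b1%:R : 'F_3) = b2%:R -> b1 = b2.
Proof.
by case: b1; case: b2 => // /eqP; rewrite ?oner_eq0 // eq_sym oner_eq0.
Qed.
Lemma natb_neq0 (b : bool) : ((b%:R : 'F_3) != 0) = b.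
Proof. by case: b; [rewrite oner_eq0 | rewrite eqxx]. Qed.

Lemma inj_sub (A B : finType) (f : A -> B) (D C : {set A}) :
  {in D &, injective f} -> C \subset D -> {in C &, injective f}.
Proof. by move=> fi /subsetP sCD x y hx hy; apply: fi; apply: sCD. Qed.

Lemma F_inj (A B : finType) (f : A -> B) (D C E : {set A}) :
  {in D &, injective f} -> C \subset D -> E \subset D -> f @: C = f @: E -> C = E.
Proof.
move=> fi /subsetP sC /subsetP sE h.
have H1 : forall X Y : {set A}, (X \subset D) -> (Y \subset D) -> f @: X = f @: Y -> X \subset Y.
  move=> X Y /subsetP sX /subsetP sY ee; apply/subsetP => x hx.
  have : f x \in f @: Y by rewrite -ee; apply: imset_f.
  case/imsetP => y hy e2; have -> : x = y by exact: (fi x y (sX _ hx) (sY _ hy) e2).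
  exact: hy.
apply/eqP; rewrite eqEsubset; apply/andP; split; apply: H1 => //; exact/subsetP.
Qed.

Lemma mem_F (A B : finType) (f : A -> B) (D C : {set A}) y :
  {in D &, injective f} -> C \subset D -> y \in D -> (f y \in f @: C) = (y \in C).
Proof.
move=> fi /subsetP sC hy; apply/imsetP/idP => [[x hx e]|]; last by exists y.
by rewrite (fi y x hy (sC _ hx) e).
Qed.

Lemma F3_03 (n : nat) : (n == 0%N) || (n == 3%N) -> (n%:R : 'F_3) = 0.
Proof. by case/orP => /eqP ->; [rewrite mulr0n | apply/eqP]. Qed.

Theorem lemma3 (P Bk : finType) (inc : P -> Bk -> bool) (B : Bk)
  (Ph : finType) (Bh : {set {set Ph}}) (z : Ph) (f : Ph -> Bk) :
  biplane_56_11_2 inc ->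
  qs_design_56_12_9 Bh ->
  iso_derived_dual inc B Bh z f ->
  exists T : {set {ffun Bk -> 'F_3}},
    let R := [set [set c | (c != B) && (x c == 1)] | x : {ffun Bk -> 'F_3} in T] in
    [/\ (forall x, x \in T -> in_SB inc B x),
        #|T| = 165%N &
        #|R| = 165%N] /\
    [/\ R = [set f @: C | C : {set Ph} in residual_pt_blocks Bh z],
        (forall s, s \in R -> #|s| = 12%N),
        (forall c, c != B -> #|[set s in R | c \in s]| = 36%N) &
        (forall s t, s \in R -> t \in R -> s != t ->
            (#|s :&: t| == 0%N) || (#|s :&: t| == 3%N))].
Proof.
move=> hbp hqs [finj fim fder].
have hr := qs_r hqs; have hb := qs_b hqs.
case: (hqs) => hPh hk hl hint.
set Res := residual_pt_blocks Bh z.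
have resP : forall C, C \in Res -> (C \in Bh) /\ (C \subset [set~ z]).
  move=> C; rewrite inE => /andP [hC hz]; split => //.
  by apply/subsetP => x hx; rewrite !inE; apply: contraNneq hz => <-.
have FB : forall C : {set Ph}, C \subset [set~ z] -> f @: C \subset [set~ B].
  by move=> C hC; rewrite -fim; apply: imsetS.
have cardF : forall C : {set Ph}, C \subset [set~ z] -> #|f @: C| = #|C|.
  by move=> C hC; apply: card_in_imset; apply: inj_sub finj hC.
have FI : forall C D : {set Ph}, C \subset [set~ z] -> D \subset [set~ z] ->
    f @: C :&: f @: D = f @: (C :&: D).
  move=> C D /subsetP hC /subsetP hD; rewrite imsetI //.
  by move=> x y hx hy; apply: finj; [apply: hC | apply: hD].
have cardRes : #|Res| = 165%N.
  have := card_split (fun C => C \in Bh) (fun C => z \in C).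
  have -> : [set x | x \in Bh] = Bh by apply/setP => x; rewrite inE.
  rewrite hb (hr z) => e.
  have -> : #|Res| = #|[set x | (x \in Bh) && ~~ (z \in x)]| by [].
  lia.
have perpC : forall C, C \in Res -> forall q, ~~ inc q B -> keyc inc (f @: C) q = 0.
  move=> C hC q hq; have [hCB hCz] := resP C hC.
  have : [set c | (c != B) && inc q c] \in dual_residual_blocks inc B.
    by apply/imsetP; exists q; rewrite ?inE.
  rewrite -fder => /imsetP [E' hE' eE'].
  move: hE'; case/imsetP => E; rewrite inE => /andP [hEB hzE] eE.
  rewrite {E'}eE in eE'.
  have sE : E :\ z \subset [set~ z] by apply/subsetP => x; rewrite !inE => /andP[].
  rewrite /keyc.
  have -> : [set c in f @: C | inc q c] = f @: C :&: f @: (E :\ z).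
    rewrite -eE'; apply/setP => c; rewrite !inE.
    case hc: (c \in f @: C) => //=.
    have : c \in [set~ B] := subsetP (FB C hCz) c hc.
    by rewrite !inE => ->.
  rewrite FI // cardF; last exact: subset_trans (subsetIl _ _) hCz.
  have -> : C :&: (E :\ z) = C :&: E.
    apply/setP => x; rewrite !inE; case: eqP => // ->.
    by move: hCz => /subsetP /(_ z); rewrite !inE eqxx; case: (z \in C) => // /(_ isT).
  apply: F3_03; apply: hint => //.
  have hzC : (z \in C) = false by move: hC; rewrite inE => /andP [_ /negbTE].
  by apply/eqP => eCE; rewrite eCE hzE in hzC.
have Finj : {in Res &, injective (fun C : {set Ph} => f @: C)}.
  move=> C D hC hD; exact: F_inj finj (resP C hC).2 (resP D hD).2.
have indFinj : {in Res &, injective (fun C : {set Ph} => ind (f @: C))}.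
  move=> C D hC hD e; apply: Finj => //; apply/setP => c.
  have := congr1 (fun x : {ffun Bk -> 'F_3} => x c) e; rewrite /ind /= !ffunE.
  exact: natb_inj.
have ERg : [set [set c | (c != B) && (x c == 1)] | x : {ffun Bk -> 'F_3} in [set ind (f @: C) | C : {set Ph} in Res]]
    = [set f @: C | C : {set Ph} in Res].
  rewrite -imset_comp; apply: eq_in_imset => C hC /=.
  apply/setP => c; rewrite !inE /ind ffunE natb_eq1.
  case hc: (c \in f @: C); rewrite ?andbF ?andbT //.
  by have := subsetP (FB C (resP C hC).2) c hc; rewrite !inE.
exists [set ind (f @: C) | C : {set Ph} in Res].
move=> R; rewrite {}/R ERg.
split; split.
- move=> x /imsetP [C hC ->]; have [hCB hCz] := resP C hC.
  have h12 : #|f @: C| = 12%N by rewrite cardF // hk.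
  split; [split|].
  + by move=> c; rewrite /ind ffunE; case: (c \in _); rewrite ?eqxx ?orbT.
  + have -> : [set c | ind (f @: C) c != 0] = f @: C.
      by apply/setP => c; rewrite inE /ind ffunE natb_neq0.
    exact: h12.
  + apply: perp_of_rows => p; case: (boolP (inc p B)) => hp.
      exact: key_B hbp h12 (perpC C hC) hp.
    exact: perpC.
  + rewrite /ind ffunE.
    have -> : (B \in f @: C) = false.
      by apply/negbTE; apply/negP => /(subsetP (FB C hCz)); rewrite !inE eqxx.
    by [].
- by rewrite card_in_imset.
- by rewrite card_in_imset.
- by [].
- by move=> s /imsetP [C hC ->]; rewrite cardF ?hk //; case: (resP C hC).
- move=> c hc.
  have : c \in f @: [set~ z] by rewrite fim !inE.
  case/imsetP => y hyz ->.
  have hyz' : y != z by move: hyz; rewrite !inE.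
  have -> : [set s in [set f @: C | C : {set Ph} in Res] | f y \in s]
      = [set f @: C | C : {set Ph} in [set C in Res | y \in C]].
    apply/setP => s; rewrite inE; apply/andP/imsetP.
      case=> /imsetP [C hC ->] hy; exists C => //.
      by rewrite inE hC /= -(mem_F finj (resP C hC).2 hyz).
    case=> C; rewrite inE => /andP [hC hyC] ->; split; first exact: imset_f.
    by rewrite (mem_F finj (resP C hC).2 hyz).
  rewrite card_in_imset; last first.
    by move=> C D /setIdP [hC _] /setIdP [hD _]; apply: Finj.
  have e := card_split (fun C => (C \in Bh) && (y \in C)) (fun C => z \in C).
  have e45 : #|[set x | (x \in Bh) && (y \in x)]| = 45%N by rewrite -(hr y).
  have e9 : #|[set x | ((x \in Bh) && (y \in x)) && (z \in x)]| = 9%N.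
    by rewrite -(hl y z hyz'); apply: eq_card => C; rewrite !inE andbA.
  have e36 : #|[set C in Res | y \in C]|
      = #|[set x | ((x \in Bh) && (y \in x)) && ~~ (z \in x)]|.
    by apply: eq_card => C; rewrite !inE andbAC.
  rewrite e36; rewrite e45 e9 in e; lia.
- move=> s t /imsetP [C hC ->] /imsetP [D hD ->] nst.
  have [hCB hCz] := resP C hC; have [hDB hDz] := resP D hD.
  rewrite FI // cardF; last exact: subset_trans (subsetIl _ _) hCz.
  by apply: hint => //; apply: contraNneq nst => ->.
Qed.
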